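(* Let $(G,\precsim)$ be a compatible quasi-ordered abelian group and $G^v=G\setminus G^o$. Then $G^v$ is a final segment of $G$. Moreover, for any $g\in G^v$ and $h\in G$ we have $cl(g+h)\leq\max(cl(g),cl(h))$, and if $h\precnsim g$ then $g\sim g+h$.
   Context: A compatible quasi-ordered abelian group is an abelian group $G$ with a total quasi-order $\precsim$ (reflexive, transitive, any two elements comparable) such that, writing $a\sim b$ for $a\precsim b\wedge b\precsim a$: $(Q_1)$ $x\sim0\Rightarrow x=0$; $(Q_2)$ $x\precsim y\wedge y\not\sim z\Rightarrow x+z\precsim y+z$, for all $x,y,z$. $cl(g)$ is the $\sim$-class of $g$; the classes are totally ordered by $cl(a)\le cl(b)\Leftrightarrow a\precsim b$. $a\precnsim b$ means $a\precsim b$ and $a\not\sim b$. An element $g$ is o-type if $cl(g)=\{g\}$ and $g$ is not of order $2$; $G^o$ is the set of o-type elements. A set $S$ is a final segment if $s\in S$, $s\precsim a$ imply $a\in S$. *)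

(* Defs.v *)
From HB Require Import structures.
From mathcomp Require Import all_boot all_order all_algebra.
Set Implicit Arguments. Unset Strict Implicit. Unset Printing Implicit Defensive.
Import GRing.Theory.
Local Open Scope ring_scope.

Definition qeqv (G : zmodType) (qle : rel G) (x y : G) : Prop :=
  qle x y /\ qle y x.

Definition cqoag (G : zmodType) (qle : rel G) : Prop :=
  [/\ (forall x, qle x x),
      (forall x y z, qle x y -> qle y z -> qle x z),
      (forall x y, qle x y \/ qle y x),
      (forall x, qeqv qle x 0 -> x = 0) &
      (forall x y z, qle x y -> ~ qeqv qle y z -> qle (x + z) (y + z))].

Definition order2 (G : zmodType) (g : G) : Prop := g != 0 /\ g + g = 0.

Definition otype (G : zmodType) (qle : rel G) (g : G) : Prop :=
  (forall x, qeqv qle x g -> x = g) /\ ~ order2 g.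

Definition vtype (G : zmodType) (qle : rel G) (g : G) : Prop := ~ otype qle g.

Definition final_segment (G : zmodType) (qle : rel G) (S : G -> Prop) : Prop :=
  forall s a, S s -> qle s a -> S a.

(* representative of max(cl a, cl b) *)
Definition qmax (G : zmodType) (qle : rel G) (a b : G) : G :=
  if qle a b then b else a.

(* Main.v *)
Require Import Defs.
From mathcomp Require Import all_boot all_order all_algebra.
Import GRing.Theory.
Local Open Scope ring_scope.
Set Implicit Arguments. Unset Strict Implicit.

Definition vchar (G : zmodType) (qle : rel G) (g : G) : Prop :=
  g != 0 /\ qeqv qle g (-g).

Lemma F1 (G : zmodType) (qle : rel G) (hG : cqoag qle) (x y : G) :
  qeqv qle x y -> x <> y -> qeqv qle y (-y).
Proof.
case: hG => refl trans tot q1 q2 [xy yx] ne.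
case: (boolP (qle y (-y) && qle (-y) y)) => [/andP[a b]|H]; first by split.
exfalso.
have nyy : ~ qeqv qle y (-y) by move=> [a b]; rewrite a b in H.
have h1 := q2 x y (-y) xy nyy. rewrite subrr in h1.
have nxy : ~ qeqv qle x (-y).
  by move=> [a b]; apply: nyy; split; [apply: trans yx a | apply: trans b xy].
have h2 := q2 y x (-y) yx nxy. rewrite subrr in h2.
apply: ne; apply/eqP; rewrite -subr_eq0; apply/eqP; apply: q1; split => //.
Qed.

Lemma vnotle0 (G : zmodType) (qle : rel G) (hG : cqoag qle) (g : G) :
  vchar qle g -> ~ qle g 0.
Proof.
move=> [gn0 [a b]] hg0.
have hG' := hG; case: hG' => refl trans tot q1 q2.
case: (boolP (qle 0 g)) => [h0g|nh].
  have g0 : g = 0 by apply: q1; split.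
  by rewrite g0 eqxx in gn0.
have n0g : ~ qeqv qle 0 (-g).
  move=> e. have : -g = 0 by apply: q1; case: e.
  by move/eqP; rewrite oppr_eq0 (negbTE gn0).
have := q2 g 0 (-g) hg0 n0g. rewrite subrr add0r => h.
by move: nh; rewrite (trans _ _ _ h b).
Qed.

Lemma vpos (G : zmodType) (qle : rel G) (hG : cqoag qle) (g : G) :
  vchar qle g -> qle 0 g /\ qle 0 (-g).
Proof.
move=> v. have hG' := hG; case: hG' => refl trans tot q1 q2.
have v' : vchar qle (-g).
  case: v => gn0 [a b]; split; first by rewrite oppr_eq0.
  by rewrite opprK; split.
split.
  by case: (tot g 0) => // /(vnotle0 hG v).
by case: (tot (-g) 0) => // /(vnotle0 hG v').
Qed.

Lemma FS (G : zmodType) (qle : rel G) (hG : cqoag qle) (g a : G) :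
  vchar qle g -> qle g a -> vchar qle a.
Proof.
move=> v ga. have hG' := hG; case: hG' => refl trans tot q1 q2.
have [p0g p0ng] := vpos hG v.
have nle0 := vnotle0 hG v.
case: v => gn0 [gng ngg].
case: (boolP (qle a g)) => [ag|nag].
  case: (eqVneq g a) => [<-|ne]; first by split => //; split.
  split.
    apply/negP => /eqP a0; subst a; apply: nle0 => //.
  apply: (F1 hG (x := g)); first by split.
  exact/eqP.
split.
  apply/negP => /eqP a0; subst a; exact: nle0 ga.
case: (tot (a + g) a) => h.
  have n1 : ~ qeqv qle a (-g).
    by move=> [e _]; move: nag; rewrite (trans _ _ _ e ngg).
  have := q2 _ _ (-g) h n1. rewrite addrK => h1.
  have n2 : ~ qeqv qle g (a - g).
    by move=> [_ e]; move: nag; rewrite (trans _ _ _ h1 e).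
  have := q2 _ _ (a - g) p0g n2.
  have -> : g + (a - g) = a by rewrite addrC addrNK.
  rewrite add0r => h2.
  apply: (F1 hG (x := a - g)); first by split.
  move=> e; move: gn0; have -> : g = 0.
    by apply/eqP; rewrite -oppr_eq0 -(addKr a (-g)) e addNr.
  by rewrite eqxx.
have n1 : ~ qeqv qle (-g) (a + g).
  move=> [_ e]; move: nag; rewrite (trans _ _ _ h (trans _ _ _ e ngg)) //.
have := q2 _ _ (a + g) p0ng n1.
have -> : - g + (a + g) = a by rewrite addrC addrK.
rewrite add0r => h2.
apply: (F1 hG (x := a + g)); first by split.
move=> e; move: gn0; have -> : g = 0.
  by apply/eqP; rewrite -(addKr a g) e addNr.
by rewrite eqxx.
Qed.

Lemma vchar_v (G : zmodType) (qle : rel G) (hG : cqoag qle) (g : G) :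
  vtype qle g <-> vchar qle g.
Proof.
have hG' := hG; case: hG' => refl trans tot q1 q2.
split.
  move=> vt.
  case: (eqVneq g 0) => [g0|gn0].
    exfalso; apply: vt; subst g; split; first by move=> x /q1.
    by case; rewrite eqxx.
  case: (boolP (qle g (-g) && qle (-g) g)) => [/andP[a b]|H]; first by split.
  exfalso; apply: vt; split.
    move=> x e; case: (eqVneq x g) => // ne.
    by have [a b] := F1 hG e (elimN eqP ne); rewrite a b in H.
  move=> [_ e]. have e' : - g = g by apply/eqP; rewrite eq_sym -subr_eq0 opprK e.
  by move: H; rewrite e' refl.
move=> [gn0 [a b]] [cl no2]. apply: no2; split => //.
have e : -g = g by apply: cl; split.
by rewrite -{1}e addNr.
Qed.

Definition qlt (G : zmodType) (qle : rel G) (x y : G) := qle x y /\ ~ qle y x.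

Lemma Neg (G : zmodType) (qle : rel G) (hG : cqoag qle) (w x : G) :
  vchar qle w -> qlt qle x w -> ~ qle w (-x).
Proof.
move=> v [xw nwx] wnx. have hG' := hG; case: hG' => refl trans tot q1 q2.
have [_ [a _]] := FS hG v wnx. rewrite opprK in a.
by apply: nwx; apply: trans wnx a.
Qed.

Lemma Sum (G : zmodType) (qle : rel G) (hG : cqoag qle) (w x y : G) :
  vchar qle w -> qlt qle x w -> qlt qle y w -> ~ qle w (x + y).
Proof.
move=> v hx hy ws. have hG' := hG; case: hG' => refl trans tot q1 q2.
have [_ [a b]] := FS hG v ws.
have xs : qle x (- (x + y)) by apply: trans hx.1 (trans _ _ _ ws a).
have n1 : ~ qeqv qle (- (x + y)) y.
  by move=> [e _]; apply: hy.2; apply: trans ws (trans _ _ _ a e).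
have := q2 _ _ y xs n1.
have -> : - (x + y) + y = - x by rewrite opprD addrNK.
move=> h. by apply: (Neg hG v hx); apply: trans ws h.
Qed.

Theorem mainTheorem7 (G : zmodType) (qle : rel G) (hG : cqoag qle) :
  final_segment qle (vtype qle) /\
  (forall g h : G, vtype qle g ->
     qle (g + h) (qmax qle g h) /\
     (qle h g /\ ~ qeqv qle h g -> qeqv qle g (g + h))).
Proof.
have hG' := hG; case: hG' => refl trans tot q1 q2.
split.
  move=> s a vs sa; apply/(vchar_v hG); apply: (FS hG (g := s)) => //; exact/(vchar_v hG).
move=> g h /(vchar_v hG) v; split.
  have [gm hm] : qle g (qmax qle g h) /\ qle h (qmax qle g h).
    rewrite /qmax; case: ifP => [->|/negbT n]; split => //.
    by case: (tot g h) => // e; rewrite e in n.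
  have vm := FS hG v gm.
  case: (boolP (qle (g + h) (qmax qle g h))) => // n.
  exfalso.
  have ms : qle (qmax qle g h) (g + h) by case: (tot (g+h) (qmax qle g h)) => // e; rewrite e in n.
  have vs := FS hG vm ms.
  apply: (Sum hG vs (x := g) (y := h)) => //.
    split; first by apply: trans gm ms.
    by move=> e; move: n; rewrite (trans _ _ _ e gm).
  split; first by apply: trans hm ms.
  by move=> e; move: n; rewrite (trans _ _ _ e hm).
move=> [hg nhg].
have ngh : ~ qle g h by move=> e; apply: nhg; split.
case: (boolP (qle (g + h) g)) => [a|na].
  case: (boolP (qle g (g + h))) => [b|nb]; first by split.
  exfalso.
  apply: (Sum hG v (x := g + h) (y := - h)); last by rewrite addrK.
    by split => //; apply/negP.
  split.
    by case: (tot (-h) g) => // e; exfalso; exact: (Neg hG v (conj hg ngh)) e.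
  exact: (Neg hG v (conj hg ngh)).
exfalso.
have ms : qle g (g + h) by case: (tot (g+h) g) => // e; rewrite e in na.
have vs := FS hG v ms.
apply: (Sum hG vs (x := g) (y := h)) => //.
  by split => //; apply/negP.
split; first by apply: trans hg ms.
by move=> e; move: na; rewrite (trans _ _ _ e hg).
Qed.
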